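(* Let $\mathsf M=\mathsf F(E)$ be a free PROP and $\mathcal E$ any PROP. The graded vector space $\mathrm{Der}(\mathsf M,\mathsf M*\mathcal E)$ is a graded pre-Lie algebra with product $\theta\diamond\phi:=(-1)^{|\theta||\phi|}\mathrm{Ex}(\tilde\phi\circ\theta|_E)$; that is, the associator $(\theta\diamond\phi)\diamond\psi-\theta\diamond(\phi\diamond\psi)$ is graded symmetric in $\phi$ and $\psi$ for all $\theta,\phi,\psi$.
   Context: Graded vector spaces over a field of characteristic zero, Koszul signs. $\mathsf F(E)$ is the free PROP on a $\Sigma$-bimodule $E$; $\mathsf M*\mathcal E$ is the coproduct of PROPs, an $\mathsf M$-module via the inclusion $\mathsf M\hookrightarrow\mathsf M*\mathcal E$. $\mathrm{Der}(\mathsf P,U)$ is the graded space of derivations (maps of $\Sigma$-bimodules that are Koszul-signed derivations for both horizontal and vertical compositions). Restriction to generators gives an isomorphism $\mathrm{Der}(\mathsf M,\mathsf M*\mathcal E)\cong\mathrm{Lin}_{\Sigma\text{-}\Sigma}(E,\mathsf M*\mathcal E)$; for $u\in\mathrm{Lin}_{\Sigma\text{-}\Sigma}(E,\mathsf M*\mathcal E)$, $\mathrm{Ex}(u)$ denotes the unique derivation with $\mathrm{Ex}(u)|_E=u$. Every $\phi\in\mathrm{Der}(\mathsf M,\mathsf M*\mathcal E)$ extends uniquely to $\tilde\phi\in\mathrm{Der}(\mathsf M*\mathcal E)$ with $\tilde\phi|_{\mathcal E}=0$. A graded pre-Lie algebra is a graded space with a bilinear product whose associator is graded symmetric in the last two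 variables. *)

(* Defs.v *)
(* Graded PROPs over a field K, as in the paper:
   a PROP is a graded Sigma-bimodule {P(m,n)} (m outputs, n inputs) with
   vertical composition  P(m,n) x P(n,k) -> P(m,k),
   horizontal composition P(m1,n1) x P(m2,n2) -> P(m1+m2,n1+n2),
   units 1_n in P(n,n), subject to the usual axioms with Koszul signs. *)
From HB Require Import structures.
From mathcomp Require Import all_boot all_order all_fingroup all_algebra.
Set Implicit Arguments. Unset Strict Implicit. Unset Printing Implicit Defensive.
Import GRing.Theory.
Local Open Scope ring_scope.

Definition ksgn {K : fieldType} (a b : int) : K := (-1) ^+ absz (a * b)%R.

Definition castP (T : nat -> nat -> Type) (m n m' n' : nat)
  (em : m = m') (en : n = n') (x : T m n) : T m' n' :=
  eq_rect n (fun n0 => T m' n0) (eq_rect m (fun m0 => T m0 n) x m' em) n' en.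
Arguments castP T {m n m' n'} em en x.

Definition pprod_fun m1 m2 (s1 : 'S_m1) (s2 : 'S_m2) (i : 'I_(m1 + m2)) : 'I_(m1 + m2) :=
  unsplit (match split i with inl k => inl (s1 k) | inr k => inr (s2 k) end).

Lemma pprod_inj m1 m2 (s1 : 'S_m1) (s2 : 'S_m2) : injective (pprod_fun s1 s2).
Proof.
move=> i j; rewrite /pprod_fun => /(congr1 split); rewrite !unsplitK => E.
apply: (can_inj splitK).
by move: E; case: (split i) => [k|k]; case: (split j) => [l|l] //= [/perm_inj ->].
Qed.

Definition pprod m1 m2 (s1 : 'S_m1) (s2 : 'S_m2) : 'S_(m1 + m2) := perm (@pprod_inj m1 m2 s1 s2).

(* block transposition  blk m1 m2 : i |-> m1 + i  if i < m2,  i - m2 otherwise *)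
Definition blk_fun m1 m2 (i : 'I_(m1 + m2)) : 'I_(m1 + m2) :=
  unsplit (match split (cast_ord (addnC m1 m2) i) with inl k => inr k | inr k => inl k end).

Lemma blk_inj m1 m2 : injective (@blk_fun m1 m2).
Proof.
move=> i j; rewrite /blk_fun => /(congr1 split); rewrite !unsplitK => E.
apply: (@cast_ord_inj _ _ (addnC m1 m2)); apply: (can_inj splitK).
by move: E; case: (split (cast_ord _ i)) => [k|k]; case: (split (cast_ord _ j)) => [l|l] //= [->].
Qed.

Definition blk m1 m2 : 'S_(m1 + m2) := perm (@blk_inj m1 m2).

Record gbimod (K : fieldType) := GBimod {
  bcar : nat -> nat -> lmodType K;
  bdeg : forall m n, int -> bcar m n -> Prop;     (* x is homogeneous of degree d *)
  blact : forall m n, 'S_m -> bcar m n -> bcar m n;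
  bract : forall m n, bcar m n -> 'S_n -> bcar m n
}.
Arguments bdeg {K} _ {m n}.
Arguments blact {K} _ {m n}.
Arguments bract {K} _ {m n}.

Definition is_gbimod (K : fieldType) (B : gbimod K) : Prop :=
  (forall m n d, bdeg B d (0 : bcar B m n)) /\
  (forall m n d (a : K) (x y : bcar B m n),
     bdeg B d x -> bdeg B d y -> bdeg B d (a *: x + y)) /\
  (* B(m,n) is the direct sum of its homogeneous components *)
  (forall m n (x : bcar B m n), exists s : seq (int * bcar B m n),
     [/\ uniq (map fst s), (forall p, p \in s -> bdeg B p.1 p.2) & x = \sum_(p <- s) p.2]) /\
  (forall m n (s : seq (int * bcar B m n)), uniq (map fst s) ->
     (forall p, p \in s -> bdeg B p.1 p.2) -> \sum_(p <- s) p.2 = 0 ->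
     forall p, p \in s -> p.2 = 0) /\
  (forall m n (s : 'S_m) (a : K) (x y : bcar B m n),
     blact B s (a *: x + y) = a *: blact B s x + blact B s y) /\
  (forall m n (s : 'S_n) (a : K) (x y : bcar B m n),
     bract B (a *: x + y) s = a *: bract B x s + bract B y s) /\
  (forall m n d (s : 'S_m) (x : bcar B m n), bdeg B d x -> bdeg B d (blact B s x)) /\
  (forall m n d (s : 'S_n) (x : bcar B m n), bdeg B d x -> bdeg B d (bract B x s)) /\
  (forall m n (x : bcar B m n), blact B 1%g x = x) /\
  (forall m n (s t : 'S_m) (x : bcar B m n), blact B (s * t)%g x = blact B s (blact B t x)) /\
  (forall m n (x : bcar B m n), bract B x 1%g = x) /\
  (forall m n (s t : 'S_n) (x : bcar B m n), bract B x (s * t)%g = bract B (bract B x s) t) /\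
  (forall m n (s : 'S_m) (t : 'S_n) (x : bcar B m n),
     bract B (blact B s x) t = blact B s (bract B x t)).

Definition is_bimod_map (K : fieldType) (B B' : gbimod K) (d : int)
  (F : forall m n, bcar B m n -> bcar B' m n) : Prop :=
  (forall m n (a : K) (x y : bcar B m n), F m n (a *: x + y) = a *: F m n x + F m n y) /\
  (forall m n k (x : bcar B m n), bdeg B k x -> bdeg B' (k + d) (F m n x)) /\
  (forall m n (s : 'S_m) (x : bcar B m n), F m n (blact B s x) = blact B' s (F m n x)) /\
  (forall m n (s : 'S_n) (x : bcar B m n), F m n (bract B x s) = bract B' (F m n x) s).

Record gprop (K : fieldType) := GProp {
  pbim :> gbimod K;
  vcomp : forall m n k, bcar pbim m n -> bcar pbim n k -> bcar pbim m k;
  hcomp : forall m1 n1 m2 n2, bcar pbim m1 n1 -> bcar pbim m2 n2 ->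
            bcar pbim (m1 + m2) (n1 + n2);
  punit : forall n, bcar pbim n n
}.
Arguments vcomp {K} _ {m n k}.
Arguments hcomp {K} _ {m1 n1 m2 n2}.
Arguments punit {K} _ n.

Definition is_gprop (K : fieldType) (P : gprop K) : Prop :=
  is_gbimod P /\
  (forall m n k (a : K) (f f' : bcar P m n) (g : bcar P n k),
     vcomp P (a *: f + f') g = a *: vcomp P f g + vcomp P f' g) /\
  (forall m n k (a : K) (f : bcar P m n) (g g' : bcar P n k),
     vcomp P f (a *: g + g') = a *: vcomp P f g + vcomp P f g') /\
  (forall m1 n1 m2 n2 (a : K) (f f' : bcar P m1 n1) (g : bcar P m2 n2),
     hcomp P (a *: f + f') g = a *: hcomp P f g + hcomp P f' g) /\
  (forall m1 n1 m2 n2 (a : K) (f : bcar P m1 n1) (g g' : bcar P m2 n2),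
     hcomp P f (a *: g + g') = a *: hcomp P f g + hcomp P f g') /\
  (forall m n k a b (f : bcar P m n) (g : bcar P n k),
     bdeg P a f -> bdeg P b g -> bdeg P (a + b) (vcomp P f g)) /\
  (forall m1 n1 m2 n2 a b (f : bcar P m1 n1) (g : bcar P m2 n2),
     bdeg P a f -> bdeg P b g -> bdeg P (a + b) (hcomp P f g)) /\
  (forall n, bdeg P 0 (punit P n)) /\
  (forall m n k l (f : bcar P m n) (g : bcar P n k) (h : bcar P k l),
     vcomp P (vcomp P f g) h = vcomp P f (vcomp P g h)) /\
  (forall m1 n1 m2 n2 m3 n3 (f : bcar P m1 n1) (g : bcar P m2 n2) (h : bcar P m3 n3),
     hcomp P (hcomp P f g) h =
     castP (fun i j => bcar P i j) (addnA m1 m2 m3) (addnA n1 n2 n3) (hcomp P f (hcomp P g h))) /\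
  (forall m n (f : bcar P m n), vcomp P (punit P m) f = f) /\
  (forall m n (f : bcar P m n), vcomp P f (punit P n) = f) /\
  (forall m n, hcomp P (punit P m) (punit P n) = punit P (m + n)) /\
  (forall m n (f : bcar P m n), castP (fun i j => bcar P i j) (add0n m) (add0n n) (hcomp P (punit P 0) f) = f) /\
  (forall m n (f : bcar P m n), castP (fun i j => bcar P i j) (addn0 m) (addn0 n) (hcomp P f (punit P 0)) = f) /\
  (forall m1 n1 k1 m2 n2 k2 a b (f1 : bcar P m1 n1) (f2 : bcar P m2 n2)
          (g1 : bcar P n1 k1) (g2 : bcar P n2 k2),
     bdeg P a f2 -> bdeg P b g1 ->
     vcomp P (hcomp P f1 f2) (hcomp P g1 g2) =
     ksgn a b *: hcomp P (vcomp P f1 g1) (vcomp P f2 g2)) /\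
  (forall m n k (s : 'S_m) (f : bcar P m n) (g : bcar P n k),
     blact P s (vcomp P f g) = vcomp P (blact P s f) g) /\
  (forall m n k (s : 'S_k) (f : bcar P m n) (g : bcar P n k),
     bract P (vcomp P f g) s = vcomp P f (bract P g s)) /\
  (forall m n k (s : 'S_n) (f : bcar P m n) (g : bcar P n k),
     vcomp P (bract P f s) g = vcomp P f (blact P s g)) /\
  (forall m1 n1 m2 n2 (s1 : 'S_m1) (s2 : 'S_m2) (f : bcar P m1 n1) (g : bcar P m2 n2),
     hcomp P (blact P s1 f) (blact P s2 g) = blact P (pprod s1 s2) (hcomp P f g)) /\
  (forall m1 n1 m2 n2 (s1 : 'S_n1) (s2 : 'S_n2) (f : bcar P m1 n1) (g : bcar P m2 n2),
     hcomp P (bract P f s1) (bract P g s2) = bract P (hcomp P f g) (pprod s1 s2)) /\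
  (forall m1 n1 m2 n2 a b (f : bcar P m1 n1) (g : bcar P m2 n2),
     bdeg P a f -> bdeg P b g ->
     castP (fun i j => bcar P i j) (addnC m2 m1) (addnC n2 n1) (hcomp P g f) =
     ksgn a b *: bract P (blact P (blk m1 m2) (hcomp P f g)) (blk n1 n2)^-1%g).

Definition is_prop_morph (K : fieldType) (P Q : gprop K)
  (F : forall m n, bcar P m n -> bcar Q m n) : Prop :=
  is_bimod_map 0 F /\
  (forall m n k (f : bcar P m n) (g : bcar P n k),
     F m k (vcomp P f g) = vcomp Q (F m n f) (F n k g)) /\
  (forall m1 n1 m2 n2 (f : bcar P m1 n1) (g : bcar P m2 n2),
     F _ _ (hcomp P f g) = hcomp Q (F m1 n1 f) (F m2 n2 g)) /\
  (forall n, F n n (punit P n) = punit Q n).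

Arguments is_prop_morph {K} P Q F.

Definition is_free_prop (K : fieldType) (E : gbimod K) (M : gprop K)
  (iota : forall m n, bcar E m n -> bcar M m n) : Prop :=
  is_gbimod E /\ is_gprop M /\ is_bimod_map 0 iota /\
  forall Q : gprop K, is_gprop Q ->
  forall u : forall m n, bcar E m n -> bcar Q m n, is_bimod_map 0 u ->
  (exists F, is_prop_morph M Q F /\ forall m n (e : bcar E m n), F m n (iota m n e) = u m n e) /\
  (forall F G, is_prop_morph M Q F -> is_prop_morph M Q G ->
     (forall m n (e : bcar E m n), F m n (iota m n e) = G m n (iota m n e)) ->
     forall m n (x : bcar M m n), F m n x = G m n x).

Arguments is_free_prop {K} E M iota.

Definition is_coproduct (K : fieldType) (M P C : gprop K)
  (iM : forall m n, bcar M m n -> bcar C m n)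
  (iP : forall m n, bcar P m n -> bcar C m n) : Prop :=
  is_gprop M /\ is_gprop P /\ is_gprop C /\
  is_prop_morph M C iM /\ is_prop_morph P C iP /\
  forall Q : gprop K, is_gprop Q ->
  forall F G, is_prop_morph M Q F -> is_prop_morph P Q G ->
  (exists H, [/\ is_prop_morph C Q H,
     (forall m n (x : bcar M m n), H m n (iM m n x) = F m n x) &
     (forall m n (y : bcar P m n), H m n (iP m n y) = G m n y)]) /\
  (forall H H', is_prop_morph C Q H -> is_prop_morph C Q H' ->
     (forall m n (x : bcar M m n), H m n (iM m n x) = H' m n (iM m n x)) ->
     (forall m n (y : bcar P m n), H m n (iP m n y) = H' m n (iP m n y)) ->
     forall m n (z : bcar C m n), H m n z = H' m n z).

Arguments is_coproduct {K} M P C iM iP.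

(* derivations of degree d from P to U, U a P-module via the PROP map i *)
Definition is_deriv (K : fieldType) (P U : gprop K)
  (i : forall m n, bcar P m n -> bcar U m n) (d : int)
  (D : forall m n, bcar P m n -> bcar U m n) : Prop :=
  is_bimod_map d D /\
  (forall m n k a (f : bcar P m n) (g : bcar P n k), bdeg P a f ->
     D m k (vcomp P f g) =
     vcomp U (D m n f) (i n k g) + ksgn d a *: vcomp U (i m n f) (D n k g)) /\
  (forall m1 n1 m2 n2 a (f : bcar P m1 n1) (g : bcar P m2 n2), bdeg P a f ->
     D _ _ (hcomp P f g) =
     hcomp U (D m1 n1 f) (i m2 n2 g) + ksgn d a *: hcomp U (i m1 n1 f) (D m2 n2 g)).

Definition is_tilde (K : fieldType) (M P C : gprop K)
  (iM : forall m n, bcar M m n -> bcar C m n)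
  (iP : forall m n, bcar P m n -> bcar C m n) (d : int)
  (phi : forall m n, bcar M m n -> bcar C m n)
  (phit : forall m n, bcar C m n -> bcar C m n) : Prop :=
  is_deriv (fun m n (z : bcar C m n) => z) d phit /\
  (forall m n (x : bcar M m n), phit m n (iM m n x) = phi m n x) /\
  (forall m n (y : bcar P m n), phit m n (iP m n y) = 0).

(* X = theta <> phi = (-1)^{|theta||phi|} Ex(phit o theta|_E), for theta of
   degree a and phi of degree b: X is the derivation M -> M*P of degree a+b
   whose restriction to the generators E is (-1)^{ab} phit o theta o iota *)
Definition is_diamond (K : fieldType) (E : gbimod K) (M P C : gprop K)
  (iota : forall m n, bcar E m n -> bcar M m n)
  (iM : forall m n, bcar M m n -> bcar C m n)
  (iP : forall m n, bcar P m n -> bcar C m n) (a b : int)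
  (theta phi X : forall m n, bcar M m n -> bcar C m n) : Prop :=
  is_deriv iM (a + b) X /\
  exists phit, is_tilde iM iP b phi phit /\
    forall m n (e : bcar E m n),
      X m n (iota m n e) = ksgn a b *: phit m n (theta m n (iota m n e)).

(* Main.v *)
Require Import Defs.
From HB Require Import structures.
From mathcomp Require Import all_boot all_order all_fingroup all_algebra.
From Stdlib Require Import ClassicalEpsilon.
From mathcomp Require Import ring.
Import GRing.Theory.
Local Open Scope ring_scope.
Set Implicit Arguments. Unset Strict Implicit. Unset Printing Implicit Defensive.

Section GPacc.
Variable K : fieldType.
Variable P : gprop K.
Hypothesis hP : is_gprop P.
Lemma gp_gb : is_gbimod P.
Proof. by case: hP => [H _]. Qed.
Lemma gp_vl : forall m n k (a : K) (f f' : bcar P m n) (g : bcar P n k),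
     vcomp P (a *: f + f') g = a *: vcomp P f g + vcomp P f' g.
Proof. by case: hP => [_ [H _]]. Qed.
Lemma gp_vr : forall m n k (a : K) (f : bcar P m n) (g g' : bcar P n k),
     vcomp P f (a *: g + g') = a *: vcomp P f g + vcomp P f g'.
Proof. by case: hP => [_ [_ [H _]]]. Qed.
Lemma gp_hl : forall m1 n1 m2 n2 (a : K) (f f' : bcar P m1 n1) (g : bcar P m2 n2),
     hcomp P (a *: f + f') g = a *: hcomp P f g + hcomp P f' g.
Proof. by case: hP => [_ [_ [_ [H _]]]]. Qed.
Lemma gp_hr : forall m1 n1 m2 n2 (a : K) (f : bcar P m1 n1) (g g' : bcar P m2 n2),
     hcomp P f (a *: g + g') = a *: hcomp P f g + hcomp P f g'.
Proof. by case: hP => [_ [_ [_ [_ [H _]]]]]. Qed.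
Lemma gp_dv : forall m n k a b (f : bcar P m n) (g : bcar P n k),
     bdeg P a f -> bdeg P b g -> bdeg P (a + b) (vcomp P f g).
Proof. by case: hP => [_ [_ [_ [_ [_ [H _]]]]]]. Qed.
Lemma gp_dh : forall m1 n1 m2 n2 a b (f : bcar P m1 n1) (g : bcar P m2 n2),
     bdeg P a f -> bdeg P b g -> bdeg P (a + b) (hcomp P f g).
Proof. by case: hP => [_ [_ [_ [_ [_ [_ [H _]]]]]]]. Qed.
Lemma gp_du : forall n, bdeg P 0 (punit P n).
Proof. by case: hP => [_ [_ [_ [_ [_ [_ [_ [H _]]]]]]]]. Qed.
Lemma gp_va : forall m n k l (f : bcar P m n) (g : bcar P n k) (h : bcar P k l),
     vcomp P (vcomp P f g) h = vcomp P f (vcomp P g h).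
Proof. by case: hP => [_ [_ [_ [_ [_ [_ [_ [_ [H _]]]]]]]]]. Qed.
Lemma gp_ha : forall m1 n1 m2 n2 m3 n3 (f : bcar P m1 n1) (g : bcar P m2 n2) (h : bcar P m3 n3),
     hcomp P (hcomp P f g) h =
     castP (fun i j => bcar P i j) (addnA m1 m2 m3) (addnA n1 n2 n3) (hcomp P f (hcomp P g h)).
Proof. by case: hP => [_ [_ [_ [_ [_ [_ [_ [_ [_ [H _]]]]]]]]]]. Qed.
Lemma gp_ul : forall m n (f : bcar P m n), vcomp P (punit P m) f = f.
Proof. by case: hP => [_ [_ [_ [_ [_ [_ [_ [_ [_ [_ [H _]]]]]]]]]]]. Qed.
Lemma gp_ur : forall m n (f : bcar P m n), vcomp P f (punit P n) = f.
Proof. by case: hP => [_ [_ [_ [_ [_ [_ [_ [_ [_ [_ [_ [H _]]]]]]]]]]]]. Qed.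
Lemma gp_hu : forall m n, hcomp P (punit P m) (punit P n) = punit P (m + n).
Proof. by case: hP => [_ [_ [_ [_ [_ [_ [_ [_ [_ [_ [_ [_ [H _]]]]]]]]]]]]]. Qed.
Lemma gp_c0l : forall m n (f : bcar P m n), castP (fun i j => bcar P i j) (add0n m) (add0n n) (hcomp P (punit P 0) f) = f.
Proof. by case: hP => [_ [_ [_ [_ [_ [_ [_ [_ [_ [_ [_ [_ [_ [H _]]]]]]]]]]]]]]. Qed.
Lemma gp_c0r : forall m n (f : bcar P m n), castP (fun i j => bcar P i j) (addn0 m) (addn0 n) (hcomp P f (punit P 0)) = f.
Proof. by case: hP => [_ [_ [_ [_ [_ [_ [_ [_ [_ [_ [_ [_ [_ [_ [H _]]]]]]]]]]]]]]]. Qed.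
Lemma gp_inter : forall m1 n1 k1 m2 n2 k2 a b (f1 : bcar P m1 n1) (f2 : bcar P m2 n2)
          (g1 : bcar P n1 k1) (g2 : bcar P n2 k2),
     bdeg P a f2 -> bdeg P b g1 ->
     vcomp P (hcomp P f1 f2) (hcomp P g1 g2) =
     ksgn a b *: hcomp P (vcomp P f1 g1) (vcomp P f2 g2).
Proof. by case: hP => [_ [_ [_ [_ [_ [_ [_ [_ [_ [_ [_ [_ [_ [_ [_ [H _]]]]]]]]]]]]]]]]. Qed.
Lemma gp_e1 : forall m n k (s : 'S_m) (f : bcar P m n) (g : bcar P n k),
     blact P s (vcomp P f g) = vcomp P (blact P s f) g.
Proof. by case: hP => [_ [_ [_ [_ [_ [_ [_ [_ [_ [_ [_ [_ [_ [_ [_ [_ [H _]]]]]]]]]]]]]]]]]. Qed.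
Lemma gp_e2 : forall m n k (s : 'S_k) (f : bcar P m n) (g : bcar P n k),
     bract P (vcomp P f g) s = vcomp P f (bract P g s).
Proof. by case: hP => [_ [_ [_ [_ [_ [_ [_ [_ [_ [_ [_ [_ [_ [_ [_ [_ [_ [H _]]]]]]]]]]]]]]]]]]. Qed.
Lemma gp_e3 : forall m n k (s : 'S_n) (f : bcar P m n) (g : bcar P n k),
     vcomp P (bract P f s) g = vcomp P f (blact P s g).
Proof. by case: hP => [_ [_ [_ [_ [_ [_ [_ [_ [_ [_ [_ [_ [_ [_ [_ [_ [_ [_ [H _]]]]]]]]]]]]]]]]]]]. Qed.
Lemma gp_e4 : forall m1 n1 m2 n2 (s1 : 'S_m1) (s2 : 'S_m2) (f : bcar P m1 n1) (g : bcar P m2 n2),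
     hcomp P (blact P s1 f) (blact P s2 g) = blact P (Defs.pprod s1 s2) (hcomp P f g).
Proof. by case: hP => [_ [_ [_ [_ [_ [_ [_ [_ [_ [_ [_ [_ [_ [_ [_ [_ [_ [_ [_ [H _]]]]]]]]]]]]]]]]]]]]. Qed.
Lemma gp_e5 : forall m1 n1 m2 n2 (s1 : 'S_n1) (s2 : 'S_n2) (f : bcar P m1 n1) (g : bcar P m2 n2),
     hcomp P (bract P f s1) (bract P g s2) = bract P (hcomp P f g) (Defs.pprod s1 s2).
Proof. by case: hP => [_ [_ [_ [_ [_ [_ [_ [_ [_ [_ [_ [_ [_ [_ [_ [_ [_ [_ [_ [_ [H _]]]]]]]]]]]]]]]]]]]]]. Qed.
Lemma gp_sym : forall m1 n1 m2 n2 a b (f : bcar P m1 n1) (g : bcar P m2 n2),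
     bdeg P a f -> bdeg P b g ->
     castP (fun i j => bcar P i j) (addnC m2 m1) (addnC n2 n1) (hcomp P g f) =
     ksgn a b *: bract P (blact P (Defs.blk m1 m2) (hcomp P f g)) (Defs.blk n1 n2)^-1%g.
Proof. by case: hP => [_ [_ [_ [_ [_ [_ [_ [_ [_ [_ [_ [_ [_ [_ [_ [_ [_ [_ [_ [_ [_ H]]]]]]]]]]]]]]]]]]]]]. Qed.
End GPacc.
Section GBacc.
Variable K : fieldType.
Variable B : gbimod K.
Hypothesis hB : is_gbimod B.
Lemma gb_0 : forall m n d, bdeg B d (0 : bcar B m n).
Proof. by case: hB => [H _]. Qed.
Lemma gb_L : forall m n d (a : K) (x y : bcar B m n),
     bdeg B d x -> bdeg B d y -> bdeg B d (a *: x + y).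
Proof. by case: hB => [_ [H _]]. Qed.
Lemma gb_dec : forall m n (x : bcar B m n), exists s : seq (int * bcar B m n),
     [/\ uniq (map fst s), (forall p, p \in s -> bdeg B p.1 p.2) & x = \sum_(p <- s) p.2].
Proof. by case: hB => [_ [_ [H _]]]. Qed.
Lemma gb_ind : forall m n (s : seq (int * bcar B m n)), uniq (map fst s) ->
     (forall p, p \in s -> bdeg B p.1 p.2) -> \sum_(p <- s) p.2 = 0 ->
     forall p, p \in s -> p.2 = 0.
Proof. by case: hB => [_ [_ [_ [H _]]]]. Qed.
Lemma gb_ll : forall m n (s : 'S_m) (a : K) (x y : bcar B m n),
     blact B s (a *: x + y) = a *: blact B s x + blact B s y.
Proof. by case: hB => [_ [_ [_ [_ [H _]]]]]. Qed.
Lemma gb_rl : forall m n (s : 'S_n) (a : K) (x y : bcar B m n),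
     bract B (a *: x + y) s = a *: bract B x s + bract B y s.
Proof. by case: hB => [_ [_ [_ [_ [_ [H _]]]]]]. Qed.
Lemma gb_ld : forall m n d (s : 'S_m) (x : bcar B m n), bdeg B d x -> bdeg B d (blact B s x).
Proof. by case: hB => [_ [_ [_ [_ [_ [_ [H _]]]]]]]. Qed.
Lemma gb_rd : forall m n d (s : 'S_n) (x : bcar B m n), bdeg B d x -> bdeg B d (bract B x s).
Proof. by case: hB => [_ [_ [_ [_ [_ [_ [_ [H _]]]]]]]]. Qed.
Lemma gb_l1 : forall m n (x : bcar B m n), blact B 1%g x = x.
Proof. by case: hB => [_ [_ [_ [_ [_ [_ [_ [_ [H _]]]]]]]]]. Qed.
Lemma gb_lM : forall m n (s t : 'S_m) (x : bcar B m n), blact B (s * t)%g x = blact B s (blact B t x).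
Proof. by case: hB => [_ [_ [_ [_ [_ [_ [_ [_ [_ [H _]]]]]]]]]]. Qed.
Lemma gb_r1 : forall m n (x : bcar B m n), bract B x 1%g = x.
Proof. by case: hB => [_ [_ [_ [_ [_ [_ [_ [_ [_ [_ [H _]]]]]]]]]]]. Qed.
Lemma gb_rM : forall m n (s t : 'S_n) (x : bcar B m n), bract B x (s * t)%g = bract B (bract B x s) t.
Proof. by case: hB => [_ [_ [_ [_ [_ [_ [_ [_ [_ [_ [_ [H _]]]]]]]]]]]]. Qed.
Lemma gb_lr : forall m n (s : 'S_m) (t : 'S_n) (x : bcar B m n),
     bract B (blact B s x) t = blact B s (bract B x t).
Proof. by case: hB => [_ [_ [_ [_ [_ [_ [_ [_ [_ [_ [_ [_ H]]]]]]]]]]]]. Qed.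
End GBacc.
Lemma sgnz (K : fieldType) (z : int) : (-1 : K) ^+ absz z = (-1) ^ z.
Proof. case: z => n //=. by rewrite NegzE -exprnN invr_sign. Qed.

Lemma sgnD (K : fieldType) (x y : int) :
  (-1 : K) ^+ absz (x + y) = (-1) ^+ absz x * (-1) ^+ absz y.
Proof. by rewrite !sgnz expfzDr // oppr_eq0 oner_eq0. Qed.

Section Signs.
Variable K : fieldType.
Local Notation ks := (@ksgn K).
Lemma ksgnC a b : ks a b = ks b a. Proof. by rewrite /ksgn mulrC. Qed.
Lemma ksgnDr a b c : ks a (b + c) = ks a b * ks a c.
Proof. by rewrite /ksgn mulrDr sgnD. Qed.
Lemma ksgnDl a b c : ks (a + b) c = ks a c * ks b c.
Proof. by rewrite ksgnC ksgnDr !(ksgnC c). Qed.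
Lemma ksgn0l b : ks 0 b = 1. Proof. by rewrite /ksgn mul0r. Qed.
Lemma ksgn0r b : ks b 0 = 1. Proof. by rewrite /ksgn mulr0. Qed.
Lemma ksgnK a b : ks a b * ks a b = 1.
Proof. by rewrite /ksgn -exprD addnn -muln2 exprM sqrr_sign. Qed.
End Signs.

Section Lin.
Variable K : fieldType.
Definition islin (V W : lmodType K) (f : V -> W) :=
  forall a x y, f (a *: x + y) = a *: f x + f y.
Variables (V W : lmodType K) (f : V -> W) (H : islin f).
Lemma lin0 : f 0 = 0.
Proof.
have e := H 1 0 0; rewrite !scale1r addr0 in e.
by apply: (@addrI _ (f 0)); rewrite addr0 -e.
Qed.
Lemma linD x y : f (x + y) = f x + f y.
Proof. by have := H 1 x y; rewrite !scale1r. Qed.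
Lemma linZ a x : f (a *: x) = a *: f x.
Proof. by have := H a x 0; rewrite !addr0 lin0 addr0. Qed.
Lemma linN x : f (- x) = - f x.
Proof. by rewrite -scaleN1r linZ scaleN1r. Qed.
Lemma linB x y : f (x - y) = f x - f y.
Proof. by rewrite linD linN. Qed.
Lemma lin_sum I (r : seq I) (P : pred I) (F : I -> V) :
  f (\sum_(i <- r | P i) F i) = \sum_(i <- r | P i) f (F i).
Proof. exact: (big_morph f linD lin0). Qed.
End Lin.

Section GB0.
Set Default Proof Using "All".
Variable K : fieldType.
Variable B : gbimod K.
Hypothesis hd0 : forall m n d, bdeg B d (0 : bcar B m n).
Hypothesis hdL : forall m n d (a : K) (x y : bcar B m n), bdeg B d x -> bdeg B d y -> bdeg B d (a *: x + y).

Lemma deg0 m n d : bdeg B d (0 : bcar B m n). Proof. exact: hd0. Qed.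
Lemma degL m n d a (x y : bcar B m n) :
  bdeg B d x -> bdeg B d y -> bdeg B d (a *: x + y).
Proof. exact: hdL. Qed.
Lemma degD m n d (x y : bcar B m n) : bdeg B d x -> bdeg B d y -> bdeg B d (x + y).
Proof. by move=> hx hy; have := degL 1 hx hy; rewrite scale1r. Qed.
Lemma degZ m n d a (x : bcar B m n) : bdeg B d x -> bdeg B d (a *: x).
Proof. by move=> hx; have := degL a hx (deg0 m n d); rewrite addr0. Qed.
Lemma degN m n d (x : bcar B m n) : bdeg B d x -> bdeg B d (- x).
Proof. by move=> hx; rewrite -scaleN1r; apply: degZ. Qed.
Lemma degE m n d d' (x : bcar B m n) : d = d' -> bdeg B d x -> bdeg B d' x.
Proof. by move=> ->. Qed.
Lemma deg_sum m n (I : eqType) (r : seq I) (P : pred I) (F : I -> bcar B m n) k :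
  (forall i, i \in r -> P i -> bdeg B k (F i)) -> bdeg B k (\sum_(i <- r | P i) F i).
Proof.
elim: r => [|x r IH] H; first by rewrite big_nil; apply: deg0.
rewrite big_cons; case: ifP => Px.
  apply: degD; first by apply: H => //; rewrite mem_head.
  by apply: IH => i Hi; apply: H; rewrite inE Hi orbT.
by apply: IH => i Hi; apply: H; rewrite inE Hi orbT.
Qed.

Definition homs m n (s : seq (int * bcar B m n)) := forall p, p \in s -> bdeg B p.1 p.2.

Lemma group m n (s : seq (int * bcar B m n)) : homs s ->
  exists t, [/\ uniq (map fst t), homs t &
    forall w : int -> K, \sum_(p <- t) w p.1 *: p.2 = \sum_(p <- s) w p.1 *: p.2].
Proof.
elim: s => [|q s IH] Hs; first by exists [::]; split => // p.
have [|t [Ut Ht Wt]] := IH; first by move=> p Hp; apply: Hs; rewrite inE Hp orbT.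
exists ((q.1, q.2 + \sum_(p <- t | p.1 == q.1) p.2) :: [seq p <- t | p.1 != q.1]).
have Em : map fst [seq p <- t | p.1 != q.1] = [seq k <- map fst t | k != q.1].
  by rewrite filter_map.
split.
- rewrite /= Em mem_filter eqxx /=; exact: filter_uniq.
- move=> p; rewrite inE => /orP [/eqP -> | ] /=.
    apply: degD; first by apply: Hs; rewrite mem_head.
    by apply: deg_sum => i Hi /eqP <-; apply: Ht.
  by rewrite mem_filter => /andP [_ Hp]; apply: Ht.
- move=> w; rewrite !big_cons /= big_filter -Wt [X in _ = _ + X](bigID (fun p => p.1 == q.1)) /=.
  rewrite scalerDr scaler_sumr addrA; congr (_ + _ + _).
  by apply: eq_bigr => p /eqP ->.
Qed.

End GB0.
Unset Default Proof Using.

Section GB.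
Variable K : fieldType.
Variable B : gbimod K.
Hypothesis hB : is_gbimod B.
Lemma degD' m n d (x y : bcar B m n) : bdeg B d x -> bdeg B d y -> bdeg B d (x + y).
Proof. by apply: (degD (gb_0 hB) (@gb_L _ _ hB)). Qed.
Lemma degZ' m n d a (x : bcar B m n) : bdeg B d x -> bdeg B d (a *: x).
Proof. by apply: (degZ (gb_0 hB) (@gb_L _ _ hB)). Qed.
Lemma degN' m n d (x : bcar B m n) : bdeg B d x -> bdeg B d (- x).
Proof. by apply: (degN (gb_0 hB) (@gb_L _ _ hB)). Qed.
Lemma deg_sum' m n (I : eqType) (r : seq I) (P : pred I) (F : I -> bcar B m n) k :
  (forall i, i \in r -> P i -> bdeg B k (F i)) -> bdeg B k (\sum_(i <- r | P i) F i).
Proof. by apply: (deg_sum (gb_0 hB) (@gb_L _ _ hB)). Qed.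
Lemma hdec m n (x : bcar B m n) :
  exists s, [/\ uniq (map fst s), homs s & x = \sum_(p <- s) p.2].
Proof. by case: hB => _ [_ [H _]]; apply: H. Qed.
Lemma hind m n (s : seq (int * bcar B m n)) : uniq (map fst s) -> homs s ->
  \sum_(p <- s) p.2 = 0 -> forall p, p \in s -> p.2 = 0.
Proof. by case: hB => _ [_ [_ [H _]]]; apply: H. Qed.

Lemma hom_ind m n (Pr : bcar B m n -> Prop) :
  (forall k x, bdeg B k x -> Pr x) ->
  (forall a x y, Pr x -> Pr y -> Pr (a *: x + y)) -> forall x, Pr x.
Proof.
move=> Hh Hl x; have [s [_ Hs ->]] := hdec x.
elim: s Hs => [|p s IH] Hs; first by rewrite big_nil; apply: (Hh 0); apply: (gb_0 hB).
rewrite big_cons -[p.2]scale1r; apply: Hl.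
  by apply: (Hh p.1); apply: Hs; rewrite mem_head.
by apply: IH => q Hq; apply: Hs; rewrite inE Hq orbT.
Qed.

Lemma fam0 m n (s : seq (int * bcar B m n)) : homs s -> \sum_(p <- s) p.2 = 0 ->
  forall w : int -> K, \sum_(p <- s) w p.1 *: p.2 = 0.
Proof.
move=> Hs S0 w; have [t [Ut Ht Wt]] := group (gb_0 hB) (@gb_L _ _ hB) Hs.
have St : \sum_(p <- t) p.2 = 0.
  have e := Wt (fun _ => 1); rewrite !(eq_bigr _ (fun p _ => scale1r p.2)) in e.
  by rewrite e.
rewrite -Wt big1_seq // => p /andP [_ Hp].
by rewrite (hind Ut Ht St Hp) scaler0.
Qed.

Definition famof m n (x : bcar B m n) s := homs s /\ x = \sum_(p <- s) p.2.

Lemma fam_ex m n (x : bcar B m n) : exists s, famof x s.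
Proof. by have [s [_ H1 H2]] := hdec x; exists s. Qed.

End GB.

Definition sig (K : fieldType) (B : gbimod K) (d : int) m n (x : bcar B m n) : bcar B m n :=
  epsilon (inhabits 0) (fun y => exists s, famof x s /\
     y = \sum_(p <- s) ksgn d p.1 *: p.2).

Section Sig.
Variable K : fieldType.
Variable B : gbimod K.
Hypothesis hB : is_gbimod B.
Variable d : int.

Lemma sigE m n (x : bcar B m n) s : famof x s ->
  sig d x = \sum_(p <- s) ksgn d p.1 *: p.2.
Proof.
move=> Fs.
have ex : exists y, exists s, famof x s /\ y = \sum_(p <- s) ksgn d p.1 *: p.2.
  by exists (\sum_(p <- s) ksgn d p.1 *: p.2), s.
rewrite /sig; have [s' [[Hs' Ex'] ->]] := epsilon_spec (inhabits 0) _ ex.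
case: Fs => Hs Ex.
pose r := s ++ map (fun p => (p.1, - p.2)) s'.
have Hr : homs r.
  move=> p; rewrite mem_cat => /orP [|]; first exact: Hs.
  by move=> /mapP [q Hq ->] /=; apply: (degN' hB); apply: Hs'.
have Sr : \sum_(p <- r) p.2 = 0.
  by rewrite big_cat big_map /= sumrN -Ex -Ex' subrr.
have := fam0 hB Hr Sr (ksgn d); rewrite big_cat big_map /=.
under [X in _ + X]eq_bigr do rewrite scalerN.
by rewrite sumrN => /subr0_eq.
Qed.

Lemma sig_hom m n k (x : bcar B m n) : bdeg B k x -> sig d x = ksgn d k *: x.
Proof.
move=> hx; rewrite (@sigE _ _ _ [:: (k, x)]) ?big_seq1 //.
by split; [move=> p; rewrite inE => /eqP -> | rewrite big_seq1].
Qed.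

Lemma sig_lin m n : islin (@sig K B d m n).
Proof.
move=> a x y; have [s Fs] := fam_ex hB x; have [t Ft] := fam_ex hB y.
rewrite (sigE Fs) (sigE Ft).
rewrite (@sigE _ _ _ (map (fun p => (p.1, a *: p.2)) s ++ t)).
  rewrite big_cat big_map /= scaler_sumr; congr (_ + _).
  by apply: eq_bigr => p _; rewrite !scalerA mulrC.
case: Fs => Hs Ex; case: Ft => Ht Ey; split.
  move=> p; rewrite mem_cat => /orP [/mapP [q Hq ->]|]; last exact: Ht; rewrite /=.
  by apply: (degZ' hB); apply: Hs.
by rewrite big_cat big_map /= -scaler_sumr -Ex -Ey.
Qed.

Lemma sig_deg m n k (x : bcar B m n) : bdeg B k x -> bdeg B k (sig d x).
Proof. by move=> hx; rewrite (sig_hom hx); apply: (degZ' hB). Qed.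
End Sig.


Section U.
Variable K : fieldType.
Variable U : gprop K.
Hypothesis hU : is_gprop U.
Variable d : int.
Let hB := gp_gb hU.
Lemma vlin_l m n k (g : bcar U n k) : islin (fun f : bcar U m n => vcomp U f g).
Proof. by move=> a x y; apply: (gp_vl hU). Qed.
Lemma vlin_r m n k (f : bcar U m n) : islin (fun g : bcar U n k => vcomp U f g).
Proof. by move=> a x y; apply: (gp_vr hU). Qed.
Lemma hlin_l m1 n1 m2 n2 (g : bcar U m2 n2) : islin (fun f : bcar U m1 n1 => hcomp U f g).
Proof. by move=> a x y; apply: (gp_hl hU). Qed.
Lemma hlin_r m1 n1 m2 n2 (f : bcar U m1 n1) : islin (fun g : bcar U m2 n2 => hcomp U f g).
Proof. by move=> a x y; apply: (gp_hr hU). Qed.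
Lemma lact_lin m n (s : 'S_m) : islin (fun x : bcar U m n => blact U s x).
Proof. by move=> a x y; apply: (gb_ll hB). Qed.
Lemma ract_lin m n (s : 'S_n) : islin (fun x : bcar U m n => bract U x s).
Proof. by move=> a x y; apply: (gb_rl hB). Qed.
Lemma sig_linU m n : islin (fun x : bcar U m n => sig d x).
Proof. exact: (@sig_lin _ _ hB d m n). Qed.

Lemma vlZ m n k (g : bcar U n k) a (x : bcar U m n) : vcomp U (a *: x) g = a *: vcomp U x g.
Proof. exact: (linZ (vlin_l _)). Qed.
Lemma vlD m n k (g : bcar U n k) (x : bcar U m n) y : vcomp U (x + y) g = vcomp U x g + vcomp U y g.
Proof. exact: (linD (vlin_l _)). Qed.
Lemma vlN m n k (g : bcar U n k) (x : bcar U m n) : vcomp U (- x) g = - vcomp U x g.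
Proof. exact: (linN (vlin_l _)). Qed.
Lemma vlB m n k (g : bcar U n k) (x : bcar U m n) y : vcomp U (x - y) g = vcomp U x g - vcomp U y g.
Proof. exact: (linB (vlin_l _)). Qed.
Lemma vl0 m n k (g : bcar U n k) : vcomp U (0 : bcar U m n) g = 0.
Proof. exact: (lin0 (vlin_l _)). Qed.
Lemma vrZ m n k (f : bcar U m n) a (x : bcar U n k) : vcomp U f (a *: x) = a *: vcomp U f x.
Proof. exact: (linZ (vlin_r _)). Qed.
Lemma vrD m n k (f : bcar U m n) (x : bcar U n k) y : vcomp U f (x + y) = vcomp U f x + vcomp U f y.
Proof. exact: (linD (vlin_r _)). Qed.
Lemma vrN m n k (f : bcar U m n) (x : bcar U n k) : vcomp U f (- x) = - vcomp U f x.
Proof. exact: (linN (vlin_r _)). Qed.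
Lemma vrB m n k (f : bcar U m n) (x : bcar U n k) y : vcomp U f (x - y) = vcomp U f x - vcomp U f y.
Proof. exact: (linB (vlin_r _)). Qed.
Lemma vr0 m n k (f : bcar U m n) : vcomp U f (0 : bcar U n k) = 0.
Proof. exact: (lin0 (vlin_r _)). Qed.
Lemma hlZ m1 n1 m2 n2 (g : bcar U m2 n2) a (x : bcar U m1 n1) : hcomp U (a *: x) g = a *: hcomp U x g.
Proof. exact: (linZ (hlin_l _)). Qed.
Lemma hlD m1 n1 m2 n2 (g : bcar U m2 n2) (x : bcar U m1 n1) y : hcomp U (x + y) g = hcomp U x g + hcomp U y g.
Proof. exact: (linD (hlin_l _)). Qed.
Lemma hlN m1 n1 m2 n2 (g : bcar U m2 n2) (x : bcar U m1 n1) : hcomp U (- x) g = - hcomp U x g.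
Proof. exact: (linN (hlin_l _)). Qed.
Lemma hlB m1 n1 m2 n2 (g : bcar U m2 n2) (x : bcar U m1 n1) y : hcomp U (x - y) g = hcomp U x g - hcomp U y g.
Proof. exact: (linB (hlin_l _)). Qed.
Lemma hl0 m1 n1 m2 n2 (g : bcar U m2 n2) : hcomp U (0 : bcar U m1 n1) g = 0.
Proof. exact: (lin0 (hlin_l _)). Qed.
Lemma hrZ m1 n1 m2 n2 (f : bcar U m1 n1) a (x : bcar U m2 n2) : hcomp U f (a *: x) = a *: hcomp U f x.
Proof. exact: (linZ (hlin_r _)). Qed.
Lemma hrD m1 n1 m2 n2 (f : bcar U m1 n1) (x : bcar U m2 n2) y : hcomp U f (x + y) = hcomp U f x + hcomp U f y.
Proof. exact: (linD (hlin_r _)). Qed.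
Lemma hrN m1 n1 m2 n2 (f : bcar U m1 n1) (x : bcar U m2 n2) : hcomp U f (- x) = - hcomp U f x.
Proof. exact: (linN (hlin_r _)). Qed.
Lemma hrB m1 n1 m2 n2 (f : bcar U m1 n1) (x : bcar U m2 n2) y : hcomp U f (x - y) = hcomp U f x - hcomp U f y.
Proof. exact: (linB (hlin_r _)). Qed.
Lemma hr0 m1 n1 m2 n2 (f : bcar U m1 n1) : hcomp U f (0 : bcar U m2 n2) = 0.
Proof. exact: (lin0 (hlin_r _)). Qed.
Lemma laZ m n (s : 'S_m) a (x : bcar U m n) : blact U s (a *: x) = a *: blact U s x.
Proof. exact: (linZ (lact_lin _)). Qed.
Lemma laD m n (s : 'S_m) (x : bcar U m n) y : blact U s (x + y) = blact U s x + blact U s y.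
Proof. exact: (linD (lact_lin _)). Qed.
Lemma laN m n (s : 'S_m) (x : bcar U m n) : blact U s (- x) = - blact U s x.
Proof. exact: (linN (lact_lin _)). Qed.
Lemma laB m n (s : 'S_m) (x : bcar U m n) y : blact U s (x - y) = blact U s x - blact U s y.
Proof. exact: (linB (lact_lin _)). Qed.
Lemma la0 m n (s : 'S_m) : blact U s (0 : bcar U m n) = 0.
Proof. exact: (lin0 (lact_lin _)). Qed.
Lemma raZ m n (s : 'S_n) a (x : bcar U m n) : bract U (a *: x) s = a *: bract U x s.
Proof. exact: (linZ (ract_lin _)). Qed.
Lemma raD m n (s : 'S_n) (x : bcar U m n) y : bract U (x + y) s = bract U x s + bract U y s.
Proof. exact: (linD (ract_lin _)). Qed.
Lemma raN m n (s : 'S_n) (x : bcar U m n) : bract U (- x) s = - bract U x s.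
Proof. exact: (linN (ract_lin _)). Qed.
Lemma raB m n (s : 'S_n) (x : bcar U m n) y : bract U (x - y) s = bract U x s - bract U y s.
Proof. exact: (linB (ract_lin _)). Qed.
Lemma ra0 m n (s : 'S_n) : bract U (0 : bcar U m n) s = 0.
Proof. exact: (lin0 (ract_lin _)). Qed.
Lemma sgZ m n a (x : bcar U m n) : sig d (a *: x) = a *: sig d x.
Proof. exact: (linZ (@sig_linU m n)). Qed.
Lemma sgD m n (x : bcar U m n) y : sig d (x + y) = sig d x + sig d y.
Proof. exact: (linD (@sig_linU m n)). Qed.
Lemma sgN m n (x : bcar U m n) : sig d (- x) = - sig d x.
Proof. exact: (linN (@sig_linU m n)). Qed.
Lemma sgB m n (x : bcar U m n) y : sig d (x - y) = sig d x - sig d y.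
Proof. exact: (linB (@sig_linU m n)). Qed.
Lemma sg0 m n : sig d (0 : bcar U m n) = 0.
Proof. exact: (lin0 (@sig_linU m n)). Qed.
Lemma lin_ext m n (W : lmodType K) (F G : bcar U m n -> W) :
  islin F -> islin G -> (forall k x, bdeg U k x -> F x = G x) -> forall x, F x = G x.
Proof.
move=> Hf Hg H; apply: (hom_ind hB) => // a x y ex ey; by rewrite Hf Hg ex ey.
Qed.

Lemma sig_homU m n k (x : bcar U m n) : bdeg U k x -> sig d x = ksgn d k *: x.
Proof. exact: (sig_hom hB). Qed.
Lemma sig_degU m n k (x : bcar U m n) : bdeg U k x -> bdeg U k (sig d x).
Proof. exact: (sig_deg hB). Qed.

Lemma sig_lact m n (s : 'S_m) (x : bcar U m n) : sig d (blact U s x) = blact U s (sig d x).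
Proof.
move: x; apply: (lin_ext (F := fun x => sig d (blact U s x)) (G := fun x => blact U s (sig d x))).
- by move=> a x y /=; rewrite laD laZ sgD sgZ.
- by move=> a x y /=; rewrite sgD sgZ laD laZ.
move=> k x hx /=; rewrite (sig_homU hx) (sig_homU (gb_ld hB _ hx)).
by rewrite laZ.
Qed.

Lemma sig_ract m n (s : 'S_n) (x : bcar U m n) : sig d (bract U x s) = bract U (sig d x) s.
Proof.
move: x; apply: (lin_ext (F := fun x => sig d (bract U x s)) (G := fun x => bract U (sig d x) s)).
- by move=> a x y /=; rewrite raD raZ sgD sgZ.
- by move=> a x y /=; rewrite sgD sgZ raD raZ.
move=> k x hx /=; rewrite (sig_homU hx) (sig_homU (gb_rd hB _ hx)).
by rewrite raZ.
Qed.

Lemma sig_vcomp m n k (f : bcar U m n) (g : bcar U n k) :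
  sig d (vcomp U f g) = vcomp U (sig d f) (sig d g).
Proof.
move: f; apply: (lin_ext (F := fun f => sig d (vcomp U f g)) (G := fun f => vcomp U (sig d f) (sig d g))).
- by move=> a x y /=; rewrite vlD vlZ sgD sgZ.
- by move=> a x y /=; rewrite sgD sgZ vlD vlZ.
move=> i f hf /=; move: g.
apply: (lin_ext (F := fun g => sig d (vcomp U f g)) (G := fun g => vcomp U (sig d f) (sig d g))).
- by move=> a x y /=; rewrite vrD vrZ sgD sgZ.
- by move=> a x y /=; rewrite sgD sgZ vrD vrZ.
move=> j g hg /=; rewrite (sig_homU (gp_dv hU hf hg)) (sig_homU hf) (sig_homU hg).
by rewrite vlZ vrZ scalerA ksgnDr mulrC.
Qed.

Lemma sig_hcomp m1 n1 m2 n2 (f : bcar U m1 n1) (g : bcar U m2 n2) :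
  sig d (hcomp U f g) = hcomp U (sig d f) (sig d g).
Proof.
move: f; apply: (lin_ext (F := fun f => sig d (hcomp U f g)) (G := fun f => hcomp U (sig d f) (sig d g))).
- by move=> a x y /=; rewrite hlD hlZ sgD sgZ.
- by move=> a x y /=; rewrite sgD sgZ hlD hlZ.
move=> i f hf /=; move: g.
apply: (lin_ext (F := fun g => sig d (hcomp U f g)) (G := fun g => hcomp U (sig d f) (sig d g))).
- by move=> a x y /=; rewrite hrD hrZ sgD sgZ.
- by move=> a x y /=; rewrite sgD sgZ hrD hrZ.
move=> j g hg /=; rewrite (sig_homU (gp_dh hU hf hg)) (sig_homU hf) (sig_homU hg).
by rewrite hlZ hrZ scalerA ksgnDr mulrC.
Qed.

Lemma sig_punit n : sig d (punit U n) = punit U n.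
Proof. by rewrite (sig_homU (gp_du hU n)) ksgn0r scale1r. Qed.

Lemma sig_cast m n m' n' (em : m = m') (en : n = n') (x : bcar U m n) :
  sig d (castP (fun i j => bcar U i j) em en x) = castP (fun i j => bcar U i j) em en (sig d x).
Proof. by case: m' / em; case: n' / en. Qed.

End U.


Lemma pair_sum (K : fieldType) (V W : lmodType K) I (r : seq I) (P : pred I)
  (F : I -> V) (G : I -> W) :
  \sum_(i <- r | P i) ((F i, G i) : (V * W)%type) = (\sum_(i <- r | P i) F i, \sum_(i <- r | P i) G i).
Proof.
elim: r => [|x r IH]; first by rewrite !big_nil.
by rewrite !big_cons; case: (P x); rewrite IH.
Qed.

Lemma fst_sum (K : fieldType) (V W : lmodType K) I (r : seq I) (F : I -> (V * W)%type) :
  (\sum_(i <- r) F i).1 = \sum_(i <- r) (F i).1.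
Proof. by elim: r => [|x r IH]; rewrite ?big_nil ?big_cons //= -IH. Qed.
Lemma snd_sum (K : fieldType) (V W : lmodType K) I (r : seq I) (F : I -> (V * W)%type) :
  (\sum_(i <- r) F i).2 = \sum_(i <- r) (F i).2.
Proof. by elim: r => [|x r IH]; rewrite ?big_nil ?big_cons //= -IH. Qed.

Section PairL.
Variables (K : fieldType) (V W : lmodType K).
Lemma pfD (x y : (V * W)%type) : (x + y).1 = x.1 + y.1. Proof. by []. Qed.
Lemma psD (x y : (V * W)%type) : (x + y).2 = x.2 + y.2. Proof. by []. Qed.
Lemma pfZ a (x : (V * W)%type) : (a *: x).1 = a *: x.1. Proof. by []. Qed.
Lemma psZ a (x : (V * W)%type) : (a *: x).2 = a *: x.2. Proof. by []. Qed.
Lemma pfN (x : (V * W)%type) : (- x).1 = - x.1. Proof. by []. Qed.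
Lemma psN (x : (V * W)%type) : (- x).2 = - x.2. Proof. by []. Qed.
Lemma pf0 : (0 : (V * W)%type).1 = 0. Proof. by []. Qed.
Lemma ps0 : (0 : (V * W)%type).2 = 0. Proof. by []. Qed.
Lemma pairE_eq (x y : (V * W)%type) : x.1 = y.1 -> x.2 = y.2 -> x = y.
Proof. by case: x y => [x1 x2] [y1 y2] /= -> ->. Qed.
End PairL.

Lemma castD (K : fieldType) (B : gbimod K) m n m' n' (em : m = m') (en : n = n') (x y : bcar B m n) :
  castP (fun i j => bcar B i j) em en (x + y) =
  castP (fun i j => bcar B i j) em en x + castP (fun i j => bcar B i j) em en y.
Proof. by case: m' / em; case: n' / en. Qed.
Lemma castZ (K : fieldType) (B : gbimod K) m n m' n' (em : m = m') (en : n = n') a (x : bcar B m n) :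
  castP (fun i j => bcar B i j) em en (a *: x) = a *: castP (fun i j => bcar B i j) em en x.
Proof. by case: m' / em; case: n' / en. Qed.

Lemma degEq (K : fieldType) (B : gbimod K) m n d d' (x : bcar B m n) :
  d = d' -> bdeg B d x -> bdeg B d' x.
Proof. by move=> ->. Qed.

Ltac qsimp := apply: pairE_eq; rewrite /= ?pfD ?psD ?pfZ ?psZ ?pfN ?psN.

Section Q.
Variable K : fieldType.
Variable U : gprop K.
Hypothesis hU : is_gprop U.
Variable d : int.
Let hB := gp_gb hU.

Definition Qcar m n : lmodType K := (bcar U m n * bcar U m n)%type.
Definition Qbim : gbimod K := @GBimod K Qcar
  (fun m n k (z : Qcar m n) => bdeg U k z.1 /\ bdeg U (k + d) z.2)
  (fun m n s (z : Qcar m n) => (blact U s z.1, blact U s z.2))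
  (fun m n (z : Qcar m n) s => (bract U z.1 s, bract U z.2 s)).

Lemma Q0 m n k : bdeg Qbim k (0 : bcar Qbim m n).
Proof. by split; apply: (gb_0 hB). Qed.
Lemma QL m n k (a : K) (x y : bcar Qbim m n) :
  bdeg Qbim k x -> bdeg Qbim k y -> bdeg Qbim k (a *: x + y).
Proof. by case=> h1 h2 [h3 h4]; split; apply: (gb_L hB). Qed.

Lemma Qgb : is_gbimod Qbim.
Proof.
split; first exact: Q0.
split; first exact: QL.
split.
  move=> m n [x1 x2].
  have [s1 [_ H1 E1]] := gb_dec hB x1; have [s2 [_ H2 E2]] := gb_dec hB x2.
  pose r := map (fun p => (p.1, ((p.2, 0) : bcar Qbim m n))) s1 ++
            map (fun p => (p.1 - d, ((0, p.2) : bcar Qbim m n))) s2.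
  have Hr : homs r.
    move=> p; rewrite mem_cat => /orP [] /mapP [q Hq ->]; split => /=.
    - exact: H1.
    - exact: (gb_0 hB).
    - exact: (gb_0 hB).
    - by rewrite subrK; apply: H2.
  have [t [Ut Ht Wt]] := group (@Q0) (@QL) Hr.
  exists t; split => //.
  have := Wt (fun _ => 1); rewrite !(eq_bigr _ (fun p _ => scale1r p.2)) => ->.
  rewrite big_cat !big_map /= !pair_sum !big1_eq.
  rewrite -E1 -E2; change ((x1, x2) = (x1 + 0, 0 + x2)); by rewrite addr0 add0r.
split.
  move=> m n s Us Hs S0 p Hp.
  have S1 : \sum_(q <- s) q.2.1 = 0 by rewrite -fst_sum S0.
  have S2 : \sum_(q <- s) q.2.2 = 0 by rewrite -snd_sum S0.
  pose f1 := fun q : int * bcar Qbim m n => (q.1, q.2.1).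
  pose f2 := fun q : int * bcar Qbim m n => (q.1 + d, q.2.2).
  have U1 : uniq (map fst (map f1 s)) by rewrite -map_comp.
  have U2 : uniq (map fst (map f2 s)).
    rewrite -map_comp (_ : fst \o f2 = (fun k => k + d) \o fst) // map_comp.
    by rewrite map_inj_uniq //; apply: addIr.
  have H1 : homs (map f1 s) by move=> q /mapP [q' Hq ->]; case: (Hs q' Hq).
  have H2 : homs (map f2 s) by move=> q /mapP [q' Hq ->]; case: (Hs q' Hq).
  have T1 : \sum_(q <- map f1 s) q.2 = 0 by rewrite big_map.
  have T2 : \sum_(q <- map f2 s) q.2 = 0 by rewrite big_map.
  have := gb_ind hB U1 H1 T1 (map_f f1 Hp).
  have := gb_ind hB U2 H2 T2 (map_f f2 Hp).
  by case: p {Hp} => k [u v] /= -> ->.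
split.
  by move=> m n s a x y; apply: pairE_eq; rewrite /= ?pfD ?psD ?pfZ ?psZ (gb_ll hB).
split.
  by move=> m n s a x y; apply: pairE_eq; rewrite /= ?pfD ?psD ?pfZ ?psZ (gb_rl hB).
split.
  by move=> m n k s x [h1 h2]; split; apply: (gb_ld hB).
split.
  by move=> m n k s x [h1 h2]; split; apply: (gb_rd hB).
split.
  by move=> m n [x1 x2] /=; rewrite !(gb_l1 hB).
split.
  by move=> m n s t [x1 x2] /=; rewrite !(gb_lM hB).
split.
  by move=> m n [x1 x2] /=; rewrite !(gb_r1 hB).
split.
  by move=> m n s t [x1 x2] /=; rewrite !(gb_rM hB).
by move=> m n s t [x1 x2] /=; rewrite !(gb_lr hB).
Qed.
Definition Qp : gprop K := @GProp K Qbim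
  (fun m n k (x : bcar Qbim m n) (y : bcar Qbim n k) =>
     ((vcomp U x.1 y.1, vcomp U x.2 y.1 + vcomp U (sig d x.1) y.2) : bcar Qbim m k))
  (fun m1 n1 m2 n2 (x : bcar Qbim m1 n1) (y : bcar Qbim m2 n2) =>
     ((hcomp U x.1 y.1, hcomp U x.2 y.1 + hcomp U (sig d x.1) y.2) : bcar Qbim (m1 + m2) (n1 + n2)))
  (fun n => ((punit U n, 0) : bcar Qbim n n)).

Lemma castPQ m n m' n' (em : m = m') (en : n = n') (z : bcar Qbim m n) :
  castP (fun i j => bcar Qbim i j) em en z =
  (castP (fun i j => bcar U i j) em en z.1, castP (fun i j => bcar U i j) em en z.2).
Proof. by case: m' / em; case: n' / en; case: z. Qed.

Lemma Qgp : is_gprop Qp.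
Proof.
split; first exact: Qgb.
split.
  move=> m n k a f f' g; qsimp; first exact: (gp_vl hU).
  by rewrite (vlD hU) (vlZ hU) (sgD hU) (sgZ hU) (vlD hU) (vlZ hU) scalerDr addrACA.
split.
  move=> m n k a f g g'; qsimp; first exact: (gp_vr hU).
  by rewrite !(vrD hU) !(vrZ hU) scalerDr addrACA.
split.
  move=> m1 n1 m2 n2 a f f' g; qsimp; first exact: (gp_hl hU).
  by rewrite (hlD hU) (hlZ hU) (sgD hU) (sgZ hU) (hlD hU) (hlZ hU) scalerDr addrACA.
split.
  move=> m1 n1 m2 n2 a f g g'; qsimp; first exact: (gp_hr hU).
  by rewrite !(hrD hU) !(hrZ hU) scalerDr addrACA.
split.
  move=> m n k a b f g [hf1 hf2] [hg1 hg2]; split => /=; first exact: (gp_dv hU).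
  apply: (degD' hB).
    by apply: (degEq _ (gp_dv hU hf2 hg1)); rewrite addrAC.
  by apply: (degEq _ (gp_dv hU (sig_degU hU d hf1) hg2)); rewrite addrA.
split.
  move=> m1 n1 m2 n2 a b f g [hf1 hf2] [hg1 hg2]; split => /=; first exact: (gp_dh hU).
  apply: (degD' hB).
    by apply: (degEq _ (gp_dh hU hf2 hg1)); rewrite addrAC.
  by apply: (degEq _ (gp_dh hU (sig_degU hU d hf1) hg2)); rewrite addrA.
split.
  by move=> n; split; [exact: (gp_du hU) | exact: (gb_0 hB)].
split.
  move=> m n k l f g h; qsimp; first exact: (gp_va hU).
  by rewrite (vlD hU) (vrD hU) (sig_vcomp hU) !(gp_va hU) addrA.
split.
  move=> m1 n1 m2 n2 m3 n3 f g h; rewrite castPQ; qsimp; first exact: (gp_ha hU).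
  by rewrite (hlD hU) (hrD hU) (sig_hcomp hU) !castD !(gp_ha hU) addrA.
split.
  move=> m n f; qsimp; first exact: (gp_ul hU).
  by rewrite (vl0 hU) (sig_punit hU) (gp_ul hU) add0r.
split.
  move=> m n f; qsimp; first exact: (gp_ur hU).
  by rewrite (vr0 hU) (gp_ur hU) addr0.
split.
  move=> m n; qsimp; first exact: (gp_hu hU).
  by rewrite (hl0 hU) (hr0 hU) addr0.
split.
  move=> m n f; rewrite castPQ; qsimp; first exact: (gp_c0l hU).
  by rewrite (hl0 hU) (sig_punit hU) add0r (gp_c0l hU).
split.
  move=> m n f; rewrite castPQ; qsimp; first exact: (gp_c0r hU).
  by rewrite (hr0 hU) addr0 (gp_c0r hU).
split.
  move=> m1 n1 k1 m2 n2 k2 a b f1 f2 g1 g2 [ha1 ha2] [hb1 hb2]; qsimp.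
    exact: (gp_inter hU _ _ ha1 hb1).
  rewrite (sig_hcomp hU) (sig_vcomp hU) (sig_homU hU d ha1) (sig_homU hU d hb1).
  rewrite !(vlD hU) !(vrD hU) !(hlD hU) !(hrD hU) !(vlZ hU) !(vrZ hU) !(hlZ hU) !(hrZ hU) !(vlZ hU).
  rewrite !(gp_inter hU _ _ ha1 hb1) (gp_inter hU _ _ ha2 hb1) (gp_inter hU _ _ ha1 hb2).
  rewrite !(vrZ hU) (gp_inter hU _ _ ha1 hb1) !scalerDr !scalerA addrACA.
  rewrite !ksgnDl !ksgnDr.
  congr (_ + _ + (_ + _)); congr (_ *: _).
    by rewrite (ksgnC _ a d) mulrCA ksgnK mulr1.
  ring.
split.
  move=> m n k s f g; qsimp; first exact: (gp_e1 hU).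
  by rewrite (laD hU) !(gp_e1 hU) (sig_lact hU).
split.
  move=> m n k s f g; qsimp; first exact: (gp_e2 hU).
  by rewrite (raD hU) !(gp_e2 hU).
split.
  move=> m n k s f g; qsimp; first exact: (gp_e3 hU).
  by rewrite (sig_ract hU) !(gp_e3 hU).
split.
  move=> m1 n1 m2 n2 s1 s2 f g; qsimp; first exact: (gp_e4 hU).
  by rewrite (sig_lact hU) (laD hU) !(gp_e4 hU).
split.
  move=> m1 n1 m2 n2 s1 s2 f g; qsimp; first exact: (gp_e5 hU).
  by rewrite (sig_ract hU) (raD hU) !(gp_e5 hU).
move=> m1 n1 m2 n2 a b f g [hf1 hf2] [hg1 hg2]; rewrite castPQ; qsimp.
  exact: (gp_sym hU hf1 hg1).
rewrite castD (sig_homU hU d hg1) (sig_homU hU d hf1) (hlZ hU) castZ.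
rewrite (gp_sym hU hf1 hg2) (gp_sym hU hf2 hg1).
rewrite (hlZ hU) (laD hU) (laZ hU) (raD hU) (raZ hU) scalerDr !scalerA addrC.
rewrite !ksgnDl !ksgnDr; congr (_ + _); congr (_ *: _).
  by rewrite mulrCA ksgnK mulr1.
by rewrite (ksgnC _ a d).
Qed.
End Q.


Section Morph.
Variable K : fieldType.
Variables A U : gprop K.
Hypotheses (hA : is_gprop A) (hU : is_gprop U).
Variable i : forall m n, bcar A m n -> bcar U m n.
Hypothesis hi : is_prop_morph A U i.
Variable d : int.

Lemma zero_deriv : is_deriv i d (fun m n (x : bcar A m n) => (0 : bcar U m n)).
Proof.
split; first split.
- by move=> m n a x y; rewrite scaler0 addr0.
split.
- by move=> m n k x _; apply: (gb_0 (gp_gb hU)).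
split.
- by move=> m n s x; rewrite (la0 hU).
- by move=> m n s x; rewrite (ra0 hU).
split.
- by move=> m n k a f g _; rewrite (vl0 hU) (vr0 hU) scaler0 addr0.
- by move=> m1 n1 m2 n2 a f g _; rewrite (hl0 hU) (hr0 hU) scaler0 addr0.
Qed.

Variable D : forall m n, bcar A m n -> bcar U m n.
Hypothesis hD : is_deriv i d D.

Lemma pair_morph : is_prop_morph A (Qp U d) (fun m n x => ((@i m n x, @D m n x) : bcar (Qp U d) m n)).
Proof.
case: hi => [[iL [iD [iLa iRa]]] [iV [iH iU]]].
case: hD => [[DL [DD [DLa DRa]]] [DV DH]].
have hAB := gp_gb hA.
split; first split.
  by move=> m n a x y; qsimp; [apply: iL | apply: DL].
split.
  move=> m n k x hx; split => /=; first exact: iD.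
  by rewrite addr0; apply: DD.
split.
  by move=> m n s x; qsimp; [apply: iLa | apply: DLa].
  by move=> m n s x; qsimp; [apply: iRa | apply: DRa].
split.
  move=> m n k f g; qsimp; first exact: iV.
  move: f; apply: (lin_ext hA (F := fun f => @D m k (vcomp A f g))
      (G := fun f => vcomp U (@D m n f) (@i n k g) + vcomp U (sig d (@i m n f)) (@D n k g))).
  - by move=> a x y /=; rewrite (gp_vl hA) DL.
  - by move=> a x y /=; rewrite DL iL (vlD hU) (vlZ hU) (sgD hU) (sgZ hU) (vlD hU) (vlZ hU) scalerDr addrACA.
  move=> a f hf /=; rewrite (DV _ _ _ _ _ _ hf) (sig_homU hU d (degEq (addr0 a) (iD _ _ _ _ hf))).
  by rewrite (vlZ hU).
split.
  move=> m1 n1 m2 n2 f g; qsimp; first exact: iH.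
  move: f; apply: (lin_ext hA (F := fun f => @D _ _ (hcomp A f g))
      (G := fun f => hcomp U (@D m1 n1 f) (@i m2 n2 g) + hcomp U (sig d (@i m1 n1 f)) (@D m2 n2 g))).
  - by move=> a x y /=; rewrite (gp_hl hA) DL.
  - by move=> a x y /=; rewrite DL iL (hlD hU) (hlZ hU) (sgD hU) (sgZ hU) (hlD hU) (hlZ hU) scalerDr addrACA.
  move=> a f hf /=; rewrite (DH _ _ _ _ _ _ _ hf) (sig_homU hU d (degEq (addr0 a) (iD _ _ _ _ hf))).
  by rewrite (hlZ hU).
move=> n; qsimp; first exact: iU.
have e := DV _ _ _ _ (punit A n) (punit A n) (gp_du hA n).
rewrite (gp_ul hA) iU (gp_ul hU) (gp_ur hU) ksgn0r scale1r in e.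
by apply: (@addrI _ (@D n n (punit A n))); rewrite addr0 -e.
Qed.
End Morph.

Lemma id_morph (K : fieldType) (C : gprop K) :
  is_prop_morph C C (fun m n (z : bcar C m n) => z).
Proof.
split; first split => //.
  by split => //; move=> m n k x; rewrite addr0.
by [].
Qed.

Lemma zero_bimod (K : fieldType) (E : gbimod K) (C : gprop K) (hC : is_gprop C) d :
  is_bimod_map 0 (fun m n (e : bcar E m n) => (0 : bcar (Qp C d) m n)).
Proof.
split; first by move=> *; rewrite scaler0 addr0.
split; first by move=> *; apply: (gb_0 (Qgb hC d)).
split; by move=> *; qsimp; rewrite ?(la0 hC) ?(ra0 hC).
Qed.

Lemma deriv_free0 (K : fieldType) (E : gbimod K) (M : gprop K)
  (iota : forall m n, bcar E m n -> bcar M m n) (hfr : is_free_prop E M iota)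
  (C : gprop K) (hC : is_gprop C) (iM : forall m n, bcar M m n -> bcar C m n)
  (hiM : is_prop_morph M C iM) d (D : forall m n, bcar M m n -> bcar C m n)
  (hD : is_deriv iM d D) (h0 : forall m n e, D m n (iota m n e) = 0) :
  forall m n x, D m n x = 0.
Proof.
case: hfr => hE [hM [hio Hu]].
have [_ Hun] := Hu (Qp C d) (Qgp hC d) _ (zero_bimod E hC d).
move=> m n x.
have := Hun _ _ (pair_morph hM hC hiM hD) (pair_morph hM hC hiM (zero_deriv hC iM d)) _ m n x.
move=> e; apply: (congr1 snd (e _)) => m' n' e'; by rewrite /= h0.
Qed.

Lemma deriv_coprod0 (K : fieldType) (M P C : gprop K)
  (iM : forall m n, bcar M m n -> bcar C m n) (iP : forall m n, bcar P m n -> bcar C m n)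
  (hco : is_coproduct M P C iM iP) d (D : forall m n, bcar C m n -> bcar C m n)
  (hD : is_deriv (fun m n (z : bcar C m n) => z) d D)
  (hM0 : forall m n x, D m n (iM m n x) = 0) (hP0 : forall m n y, D m n (iP m n y) = 0) :
  forall m n z, D m n z = 0.
Proof.
case: hco => hM [hP [hC [hiM [hiP Hu]]]].
have [_ Hun] := Hu (Qp C d) (Qgp hC d) _ _ (pair_morph hM hC hiM (zero_deriv hC iM d))
  (pair_morph hP hC hiP (zero_deriv hC iP d)).
move=> m n z.
have := Hun _ _ (pair_morph hC hC (id_morph C) hD)
  (pair_morph hC hC (id_morph C) (zero_deriv hC (fun m n (z : bcar C m n) => z) d)) _ _ m n z.
move=> e; apply: (congr1 snd (e _ _)).
- by move=> m' n' x; rewrite /= hM0.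
- by move=> m' n' y; rewrite /= hP0.
Qed.


Section Der.
Variable K : fieldType.
Variables A U : gprop K.
Hypotheses (hU : is_gprop U).
Variable i : forall m n, bcar A m n -> bcar U m n.
Variable d : int.

Lemma deriv_ext (D1 D2 : forall m n, bcar A m n -> bcar U m n) :
  (forall m n x, D1 m n x = D2 m n x) -> is_deriv i d D1 -> is_deriv i d D2.
Proof.
move=> E [[L [Dg [La Ra]]] [V H]].
split; first split.
- by move=> m n a x y; rewrite -!E L.
split.
- by move=> m n k x hx; rewrite -E; apply: Dg.
split.
- by move=> m n s x; rewrite -!E La.
- by move=> m n s x; rewrite -!E Ra.
split.
- by move=> m n k a f g hf; rewrite -!E (V _ _ _ _ _ _ hf).
- by move=> m1 n1 m2 n2 a f g hf; rewrite -!E (H _ _ _ _ _ _ _ hf).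
Qed.

Lemma deriv_lin c (D1 D2 : forall m n, bcar A m n -> bcar U m n) :
  is_deriv i d D1 -> is_deriv i d D2 ->
  is_deriv i d (fun m n x => c *: D1 m n x + D2 m n x).
Proof.
move=> [[L1 [Dg1 [La1 Ra1]]] [V1 H1]] [[L2 [Dg2 [La2 Ra2]]] [V2 H2]].
split; first split.
- move=> m n a x y; rewrite L1 L2 !scalerDr !scalerA (mulrC c) addrACA.
  by rewrite -scalerA -scalerDr.
split.
- move=> m n k x hx; apply: (gb_L (gp_gb hU)); [apply: Dg1 | apply: Dg2] => //.
split.
- by move=> m n s x; rewrite La1 La2 (laD hU) (laZ hU).
- by move=> m n s x; rewrite Ra1 Ra2 (raD hU) (raZ hU).
split.
- move=> m n k a f g hf; rewrite (V1 _ _ _ _ _ _ hf) (V2 _ _ _ _ _ _ hf).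
  by rewrite (vlD hU) (vlZ hU) (vrD hU) (vrZ hU) !scalerDr !scalerA (mulrC c) addrACA.
- move=> m1 n1 m2 n2 a f g hf; rewrite (H1 _ _ _ _ _ _ _ hf) (H2 _ _ _ _ _ _ _ hf).
  by rewrite (hlD hU) (hlZ hU) (hrD hU) (hrZ hU) !scalerDr !scalerA (mulrC c) addrACA.
Qed.
End Der.

Lemma deriv_degE (K : fieldType) (A U : gprop K) i d d' (D : forall m n, bcar A m n -> bcar U m n) :
  d = d' -> is_deriv i d D -> is_deriv i d' D.
Proof. by move=> ->. Qed.

Lemma deriv_comp (K : fieldType) (M C : gprop K) (iM : forall m n, bcar M m n -> bcar C m n)
  (hiM : is_prop_morph M C iM) d (X : forall m n, bcar C m n -> bcar C m n) :
  is_deriv (fun m n (z : bcar C m n) => z) d X ->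
  is_deriv iM d (fun m n x => X m n (iM m n x)).
Proof.
case: hiM => [[iL [iD [iLa iRa]]] [iV [iH iU]]].
move=> [[L [Dg [La Ra]]] [V H]].
split; first split.
- by move=> m n a x y; rewrite iL L.
split.
- by move=> m n k x hx; have := Dg _ _ _ _ (iD _ _ _ _ hx); rewrite addr0.
split.
- by move=> m n s x; rewrite iLa La.
- by move=> m n s x; rewrite iRa Ra.
split.
- by move=> m n k a f g hf; rewrite iV (V _ _ _ _ _ _ (degEq (addr0 a) (iD _ _ _ _ hf))).
- by move=> m1 n1 m2 n2 a f g hf; rewrite iH (H _ _ _ _ _ _ _ (degEq (addr0 a) (iD _ _ _ _ hf))).
Qed.


Lemma comb_lin (K : fieldType) (V : lmodType K) (a s : K) (u1 u2 v1 v2 : V) :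
  a *: u1 + u2 - s *: (a *: v1 + v2) = a *: (u1 - s *: v1) + (u2 - s *: v2).
Proof.
by rewrite scalerDr scalerBr !scalerA (mulrC s) opprD addrACA.
Qed.

Lemma key6 (K : fieldType) (V : lmodType K) (A1 A2 A3 A4 B1 B4 : V) (p q r s t z : K) :
  p = s * r -> q = s * t -> z = q * r ->
  A1 + p *: A2 + q *: (A3 + r *: A4) - s *: (B1 + t *: A3 + r *: (A2 + q *: B4)) =
  A1 - s *: B1 + z *: (A4 - s *: B4).
Proof.
move=> -> -> ->.
rewrite !scalerDr ?scalerBr !scalerA !opprD !addrA.
set a2 := (s * r) *: A2; set a3 := (s * t) *: A3; set a4 := (s * t * r) *: A4.
set b1 := s *: B1.
rewrite (addrAC _ (- b1) (- a3)) (addrAC _ a4 (- a3)) addrK.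
rewrite (addrAC _ (- b1) (- a2)) (addrAC _ a4 (- a2)) addrK.
rewrite (addrAC A1 a4 (- b1)); congr (_ + _).
by rewrite scalerN scalerA; congr (- (_ *: _)); ring.
Qed.

Section Comm.
Variable K : fieldType.
Variable C : gprop K.
Hypothesis hC : is_gprop C.
Variables (dx dy : int) (X Y : forall m n, bcar C m n -> bcar C m n).
Hypotheses (hX : is_deriv (fun m n (z : bcar C m n) => z) dx X)
           (hY : is_deriv (fun m n (z : bcar C m n) => z) dy Y).

Lemma comm_deriv : is_deriv (fun m n (z : bcar C m n) => z) (dx + dy)
  (fun m n z => @Y m n (@X m n z) - ksgn dx dy *: @X m n (@Y m n z)).
Proof.
move: hX hY => [[XL [XD [XLa XRa]]] [XV XH]] [[YL [YD [YLa YRa]]] [YV YH]].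
have hB := gp_gb hC.
split; first split.
- by move=> m n a x y; rewrite XL YL YL XL comb_lin.
split.
- move=> m n k x hx; apply: (degD' hB).
    by apply: (degEq _ (YD _ _ _ _ (XD _ _ _ _ hx))); rewrite addrA.
  apply: (degN' hB); apply: (degZ' hB).
  by apply: (degEq _ (XD _ _ _ _ (YD _ _ _ _ hx))); rewrite -addrA (addrC dy).
split.
- by move=> m n s x; rewrite XLa YLa YLa XLa (laB hC) (laZ hC).
- by move=> m n s x; rewrite XRa YRa YRa XRa (raB hC) (raZ hC).
split.
- move=> m n k a f g hf /=.
  rewrite (XV _ _ _ _ _ _ hf) (YV _ _ _ _ _ _ hf).
  rewrite !(linD (YL _ _)) !(linZ (YL _ _)) !(linD (XL _ _)) !(linZ (XL _ _)).
  rewrite (YV _ _ _ _ _ _ (XD _ _ _ _ hf)) (YV _ _ _ _ _ _ hf).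
  rewrite (XV _ _ _ _ _ _ (YD _ _ _ _ hf)) (XV _ _ _ _ _ _ hf).
  rewrite (vlB hC) (vlZ hC) (vrB hC) (vrZ hC).
  apply: key6.
  - by rewrite ksgnDr mulrC (ksgnC _ dy dx).
  - by rewrite ksgnDr mulrCA ksgnK mulr1.
  - by rewrite ksgnDl.
- move=> m1 n1 m2 n2 a f g hf /=.
  rewrite (XH _ _ _ _ _ _ _ hf) (YH _ _ _ _ _ _ _ hf).
  rewrite !(linD (YL _ _)) !(linZ (YL _ _)) !(linD (XL _ _)) !(linZ (XL _ _)).
  rewrite (YH _ _ _ _ _ _ _ (XD _ _ _ _ hf)) (YH _ _ _ _ _ _ _ hf).
  rewrite (XH _ _ _ _ _ _ _ (YD _ _ _ _ hf)) (XH _ _ _ _ _ _ _ hf).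
  rewrite (hlB hC) (hlZ hC) (hrB hC) (hrZ hC).
  apply: key6.
  - by rewrite ksgnDr mulrC (ksgnC _ dy dx).
  - by rewrite ksgnDr mulrCA ksgnK mulr1.
  - by rewrite ksgnDl.
Qed.
End Comm.


Lemma der_lin (K : fieldType) (A U : gprop K) i d (D : forall m n, bcar A m n -> bcar U m n) :
  is_deriv i d D -> forall m n, islin (D m n).
Proof. by case=> [[L _] _] m n a x y; apply: L. Qed.

Lemma deriv_scale (K : fieldType) (A U : gprop K) (hU : is_gprop U) i d c
  (D : forall m n, bcar A m n -> bcar U m n) :
  is_deriv i d D -> is_deriv i d (fun m n x => c *: D m n x).
Proof.
move=> hD; apply: (deriv_ext (D1 := fun m n x => c *: D m n x + 0)).
  by move=> m n x; rewrite addr0.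
exact: (deriv_lin hU c hD (zero_deriv hU i d)).
Qed.

Lemma deriv_sub (K : fieldType) (A U : gprop K) (hU : is_gprop U) i d
  (D1 D2 : forall m n, bcar A m n -> bcar U m n) :
  is_deriv i d D1 -> is_deriv i d D2 -> is_deriv i d (fun m n x => D1 m n x - D2 m n x).
Proof.
move=> h1 h2; apply: (deriv_ext (D1 := fun m n x => (-1) *: D2 m n x + D1 m n x)).
  by move=> m n x; rewrite scaleN1r addrC.
exact: (deriv_lin hU (-1) h2 h1).
Qed.

Section Main.
Variable K : fieldType.
Variables (E : gbimod K) (M : gprop K) (iota : forall m n, bcar E m n -> bcar M m n).
Variables (P C : gprop K) (iM : forall m n, bcar M m n -> bcar C m n)
  (iP : forall m n, bcar P m n -> bcar C m n).
Hypotheses (hfr : is_free_prop E M iota) (hco : is_coproduct M P C iM iP).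

Lemma hC : is_gprop C. Proof. by case: hco => _ [_ [h _]]. Qed.
Lemma hiM : is_prop_morph M C iM. Proof. by case: hco => _ [_ [_ [h _]]]. Qed.

Lemma cderiv0 d (Dl : forall m n, bcar C m n -> bcar C m n) :
  is_deriv (fun m n (z : bcar C m n) => z) d Dl ->
  (forall m n y, Dl m n (@iP m n y) = 0) ->
  (forall m n e, Dl m n (@iM m n (@iota m n e)) = 0) ->
  forall m n z, Dl m n z = 0.
Proof.
move=> hD hP0 hE0; apply: (deriv_coprod0 hco hD) => //.
exact: (deriv_free0 hfr hC hiM (deriv_comp hiM hD) hE0).
Qed.

Lemma tilde_uniq d phi t1 t2 :
  is_tilde iM iP d phi t1 -> is_tilde iM iP d phi t2 -> forall m n z, t1 m n z = t2 m n z.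
Proof.
move=> [h1 [e1 v1]] [h2 [e2 v2]] m n z.
apply/eqP; rewrite -subr_eq0; apply/eqP.
apply: (cderiv0 (deriv_sub hC h1 h2)) => m' n' y.
  by rewrite v1 v2 subrr.
by rewrite e1 e2 subrr.
Qed.
End Main.

Unset Implicit Arguments. Set Strict Implicit. Set Printing Implicit Defensive.

Lemma der0 {K : fieldType} {A U : gprop K} {i d} {D : forall m n, bcar A m n -> bcar U m n}
  (hD : is_deriv i d D) {m n} : D m n 0 = 0.
Proof. exact: (lin0 (@der_lin K A U i d D hD m n)). Qed.
Lemma derZ {K : fieldType} {A U : gprop K} {i d} {D : forall m n, bcar A m n -> bcar U m n}
  (hD : is_deriv i d D) {m n} a x : D m n (a *: x) = a *: D m n x.
Proof. exact: (linZ (@der_lin K A U i d D hD m n)). Qed.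

Lemma key3 (K : fieldType) (V : lmodType K) (u w1 w2 : V) (p1 p2 q r1 r2 s t : K) :
  p1 * p2 * s = s * r1 * r2 -> p1 * p2 * s = q -> p1 * p2 = s * t ->
  p1 *: (p2 *: ((s *: w1 - w2) + s *: u)) - q *: w1 - s *: (r1 *: (r2 *: u) - t *: w2) = 0.
Proof.
move=> h1 h2 h3.
rewrite !scalerA !scalerDr !scalerN !scalerA mulrA -h1 h2 h3.
set A := q *: w1; set B := (s * t) *: w2; set Cc := q *: u.
by rewrite (addrAC (A - B)) (addrAC A) subrr add0r opprB addrACA addNr subrr addr0.
Qed.

Theorem mainTheorem7 (K : fieldType) (charK0 : [pchar K] =i pred0)
  (E : gbimod K) (M : gprop K) (iota : forall m n, bcar E m n -> bcar M m n)
  (P : gprop K) (C : gprop K)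
  (iM : forall m n, bcar M m n -> bcar C m n)
  (iP : forall m n, bcar P m n -> bcar C m n) :
  is_free_prop E M iota ->
  is_gprop P ->
  is_coproduct M P C iM iP ->
  forall (a b c : int) (theta phi psi : forall m n, bcar M m n -> bcar C m n),
  is_deriv iM a theta -> is_deriv iM b phi -> is_deriv iM c psi ->
  forall (th_ph th_ph__ps ph_ps th__ph_ps th_ps th_ps__ph ps_ph th__ps_ph :
            forall m n, bcar M m n -> bcar C m n),
  (* th_ph = theta <> phi,  th_ph__ps = (theta <> phi) <> psi, etc. *)
  is_diamond iota iM iP a b theta phi th_ph ->
  is_diamond iota iM iP (a + b) c th_ph psi th_ph__ps ->
  is_diamond iota iM iP b c phi psi ph_ps ->
  is_diamond iota iM iP a (b + c) theta ph_ps th__ph_ps ->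
  is_diamond iota iM iP a c theta psi th_ps ->
  is_diamond iota iM iP (a + c) b th_ps phi th_ps__ph ->
  is_diamond iota iM iP c b psi phi ps_ph ->
  is_diamond iota iM iP a (c + b) theta ps_ph th__ps_ph ->
  (* the associator is graded symmetric in its last two arguments *)
  forall m n (x : bcar M m n),
    th_ph__ps m n x - th__ph_ps m n x =
    ksgn b c *: (th_ps__ph m n x - th__ps_ph m n x).
Proof.
move=> hfr hP hco a b c theta phi psi hth hph hps th_ph th_ph__ps ph_ps th__ph_ps
  th_ps th_ps__ph ps_ph th__ps_ph d1 d2 d3 d4 d5 d6 d7 d8 m n x.
have hC := hC hco. have hiM := hiM hco.
case: d1 => D1 [phit [tl1 E1]].
case: d2 => D2 [psit [tl2 E2]].
case: d3 => D3 [psit3 [tl3 E3]].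
case: d4 => D4 [T1 [tl4 E4]].
case: d5 => D5 [psit5 [tl5 E5]].
case: d6 => D6 [phit6 [tl6 E6]].
case: d7 => D7 [phit7 [tl7 E7]].
case: d8 => D8 [T2 [tl8 E8]].
have u3 := tilde_uniq hfr hco tl3 tl2.
have u5 := tilde_uniq hfr hco tl5 tl2.
have u6 := tilde_uniq hfr hco tl6 tl1.
have u7 := tilde_uniq hfr hco tl7 tl1.
case: (tl1) => hphit [ephit vphit]; case: (tl2) => hpsit [epsit vpsit].
case: (tl4) => hT1 [eT1 vT1]; case: (tl8) => hT2 [eT2 vT2].
have comm : forall m n z, psit m n (phit m n z) - ksgn b c *: phit m n (psit m n z) =
    ksgn b c *: T1 m n z - T2 m n z.
  move=> m' n' z; apply/eqP; rewrite -subr_eq0; apply/eqP.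
  apply: (cderiv0 hfr hco (d := b + c) (Dl := fun m n z =>
     (psit m n (phit m n z) - ksgn b c *: phit m n (psit m n z)) - (ksgn b c *: T1 m n z - T2 m n z))).
  - apply: (deriv_sub hC); first exact: (comm_deriv hC hphit hpsit).
    apply: (deriv_sub hC); first exact: (deriv_scale hC).
    exact: (deriv_degE (addrC c b) hT2).
  - move=> m1 n1 y /=; rewrite vphit vpsit vT1 vT2 (der0 hpsit) (der0 hphit).
    by rewrite !scaler0 !subrr.
  - move=> m1 n1 e /=; rewrite ephit epsit eT1 eT2 E3 E7 u3 u7 (ksgnC _ c b) scalerA ksgnK scale1r.
    by rewrite subrr.
have comm' : forall m n z, psit m n (phit m n z) =
    (ksgn b c *: T1 m n z - T2 m n z) + ksgn b c *: phit m n (psit m n z).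
  by move=> m' n' z; rewrite -comm subrK.
apply/eqP; rewrite -subr_eq0; apply/eqP.
apply: (deriv_free0 hfr hC hiM (d := a + b + c) (D := fun m n x =>
   (th_ph__ps m n x - th__ph_ps m n x) - ksgn b c *: (th_ps__ph m n x - th__ps_ph m n x))).
- apply: (deriv_sub hC); first apply: (deriv_sub hC).
  + exact: D2.
  + exact: (deriv_degE (addrA a b c) D4).
  apply: (deriv_scale hC); apply: (deriv_sub hC).
  + exact: (deriv_degE (addrAC a c b) D6).
  + exact: (deriv_degE (etrans (addrA a c b) (addrAC a c b)) D8).
move=> m' n' e /=.
rewrite E2 E1 E4 E6 E5 E8 u6 u5 (derZ hpsit) (derZ hphit) comm'.
apply: key3.
- by rewrite ?ksgnDl ?ksgnDr (ksgnC _ c b); ring.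
- rewrite ?ksgnDl ?ksgnDr -[RHS]mulr1 -(ksgnK K b c); ring.
- by rewrite ?ksgnDl ?ksgnDr; ring.
Qed.
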